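(* Let $F\subseteq P_{3,4}$ be an exposed face defined by a linear functional $L:H_4\to\mathbb R$ that is nonnegative on $P_{3,4}$ with $F=\ker L\cap P_{3,4}$. Let $B_L:H_2\times H_2\to\mathbb R$, $B_L(f,g)=L(fg)$ (a positive semidefinite symmetric bilinear form), and $\ker B_L=\{f\in H_2: B_L(f,g)=0\ \forall g\in H_2\}$. Then $\ker B_L=J_F$.
   Context: $H_k\subseteq\mathbb R[x,y,z]$: real ternary forms of degree $k$; $P_{3,4}=\{f\in H_4: f\ge0\text{ on }\mathbb P^2(\mathbb R)\}$. A face of $P_{3,4}$ is a convex subcone $F$ such that $a,b\in P_{3,4}$, $a+b\in F$ imply $a,b\in F$; it is exposed if $F=\ker L\cap P_{3,4}$ for a linear functional $L$ nonnegative on $P_{3,4}$. $J_F=\{q\in H_2: q^2\in F\}$. *)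

(* Defs.v *)
(* real ternary forms represented as polynomial functions R^3 -> R. *)
From Stdlib Require Import Reals.
Open Scope R_scope.

Definition tfun := R -> R -> R -> R.

Definition is_form (k : nat) (f : tfun) : Prop :=
  exists c : nat -> nat -> R, forall x y z : R,
    f x y z = sum_f_R0 (fun i =>
                sum_f_R0 (fun j => c i j * x ^ i * y ^ j * z ^ (k - i - j))
                         (k - i)) k.

Definition fmul (f g : tfun) : tfun := fun x y z => f x y z * g x y z.
Definition fadd (f g : tfun) : tfun := fun x y z => f x y z + g x y z.
Definition fscal (a : R) (f : tfun) : tfun := fun x y z => a * f x y z.

(* P_{3,4}: quartic forms nonnegative on R^3 (equivalently on P^2(R)). *)
Definition P34 (f : tfun) : Prop :=
  is_form 4 f /\ forall x y z : R, 0 <= f x y z.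

(* L is a linear functional on H_4 (only its values on H_4 matter). *)
Definition linear_on_H4 (L : tfun -> R) : Prop :=
  (forall f g, is_form 4 f -> is_form 4 g -> L (fadd f g) = L f + L g) /\
  (forall a f, is_form 4 f -> L (fscal a f) = a * L f).

Definition J (F : tfun -> Prop) (q : tfun) : Prop :=
  is_form 2 q /\ F (fmul q q).

Definition B (L : tfun -> R) (f g : tfun) : R := L (fmul f g).
Definition kerB (L : tfun -> R) (f : tfun) : Prop :=
  is_form 2 f /\ forall g, is_form 2 g -> B L f g = 0.

(* Main.v *)
Require Import Defs.
From Stdlib Require Import Reals Lra Psatz.
Open Scope R_scope.

Lemma form4_add f g : is_form 4 f -> is_form 4 g -> is_form 4 (fadd f g).
Proof.
  intros [c1 H1] [c2 H2]. exists (fun i j => c1 i j + c2 i j).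
  intros x y z. unfold fadd. rewrite H1, H2. simpl. ring.
Qed.

Lemma form4_scal a f : is_form 4 f -> is_form 4 (fscal a f).
Proof.
  intros [c1 H1]. exists (fun i j => a * c1 i j).
  intros x y z. unfold fscal. rewrite H1. simpl. ring.
Qed.

Definition pc (a b : nat -> nat -> R) (i j : nat) : R :=
  sum_f_R0 (fun i1 => sum_f_R0 (fun j1 =>
    if andb (Nat.leb (i1 + j1) 2) (andb (Nat.leb i1 i) (andb (Nat.leb j1 j)
         (Nat.leb ((i - i1) + (j - j1)) 2)))
    then a i1 j1 * b (i - i1)%nat (j - j1)%nat else 0) 2) 2.

Lemma form_mul f g : is_form 2 f -> is_form 2 g -> is_form 4 (fmul f g).
Proof.
  intros [a Ha] [b Hb]. exists (pc a b).
  intros x y z. unfold fmul. rewrite Ha, Hb. unfold pc. simpl. ring.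
Qed.

Lemma quad_lemma b c : 0 <= c -> (forall t, 0 <= 2 * t * b + t ^ 2 * c) -> b = 0.
Proof.
  intros Hc H. destruct (Req_dec b 0) as [|Hb]; auto. exfalso.
  set (s := / (c + 1)).
  assert (Hs : s * (c + 1) = 1) by (unfold s; field; lra).
  assert (Hs0 : 0 < s) by (unfold s; apply Rinv_0_lt_compat; lra).
  specialize (H (- b * s)).
  assert (Hb2 : 0 < b * b) by nra.
  assert (s * c < 1) by nra.
  assert (E : 2 * (- b * s) * b + (- b * s) ^ 2 * c = (b * b) * s * (s * c - 2)) by ring.
  rewrite E in H.
  assert (0 < (b*b) * s) by nra. nra.
Qed.

Theorem mainTheorem16 (L : tfun -> R) (F : tfun -> Prop)
  (HL : linear_on_H4 L)
  (Hnn : forall f, P34 f -> 0 <= L f)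
  (HF : forall f, F f <-> (P34 f /\ L f = 0)) :
  forall q : tfun, kerB L q <-> J F q.
Proof.
  destruct HL as [Hadd Hsc].
  intros q; split.
  - intros [Hq Hk]. split; auto. apply HF. split.
    + split. apply form_mul; auto. intros x y z. unfold fmul. nra.
    + apply (Hk q Hq).
  - intros [Hq HFq]. apply HF in HFq. destruct HFq as [HP Hz].
    split; auto. intros g Hg. unfold B.
    assert (Hqg := form_mul q g Hq Hg).
    assert (Hgg := form_mul g g Hg Hg).
    assert (Hqq := form_mul q q Hq Hq).
    apply (quad_lemma _ (L (fmul g g))).
    + apply Hnn. split; auto. intros x y z. unfold fmul. nra.
    + intros t.
      set (G := fadd (fadd (fmul q q) (fscal (2 * t) (fmul q g))) (fscal (t ^ 2) (fmul g g))).
      assert (HG : P34 G).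
      { split. unfold G. apply form4_add. apply form4_add; auto. apply form4_scal; auto.
        apply form4_scal; auto.
        intros x y z. unfold G, fadd, fscal, fmul.
        assert (E : q x y z * q x y z + 2 * t * (q x y z * g x y z) + t ^ 2 * (g x y z * g x y z)
                = (q x y z + t * g x y z) * (q x y z + t * g x y z)) by ring.
        rewrite E. apply Rle_0_sqr. }
      apply Hnn in HG. unfold G in HG.
      rewrite Hadd, Hadd, Hsc, Hsc in HG; auto using form4_add, form4_scal.
      rewrite Hz in HG. lra.
Qed.
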